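(* Let $N\geq 2$ and let $\Sigma$ be the one-sided shift on $\{0,1,\dots,N-1\}^{\mathbb{N}_0}$, ordered lexicographically. Then $\Sigma$ has no forbidden order patterns of length $L\leq N+1$: for every $L\leq N+1$ and every $\pi\in\mathcal{S}_L$ there is $\omega\in\{0,1,\dots,N-1\}^{\mathbb{N}_0}$ that defines $\pi$.
   Context: $\{0,1,\dots,N-1\}^{\mathbb{N}_0}$ is the set of sequences $\omega=(\omega_0,\omega_1,\dots)$ with $\omega_n\in\{0,\dots,N-1\}$, and $\Sigma(\omega_0,\omega_1,\omega_2,\dots)=(\omega_1,\omega_2,\dots)$. The lexicographic order: $\omega<\omega'$ iff $\omega_0<\omega'_0$, or there is $n\geq1$ with $\omega_k=\omega'_k$ for $k<n$ and $\omega_n<\omega'_n$. $\mathcal{S}_L$ is the set of permutations $\pi=[\pi_0,\dots,\pi_{L-1}]$ of $\{0,\dots,L-1\}$. A sequence $\omega$ defines $\pi$ if $\Sigma^{\pi_0}(\omega)<\Sigma^{\pi_1}(\omega)<\dots<\Sigma^{\pi_{L-1}}(\omega)$. A pattern $\pi\in\mathcal{S}_L$ is forbidden for $\Sigma$ if no $\omega$ defines it. *)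

(* Defs.v *)
From mathcomp Require Import all_boot all_order all_fingroup.
Set Implicit Arguments. Unset Strict Implicit. Unset Printing Implicit Defensive.

Definition seqN (N : nat) := nat -> 'I_N.

Definition shift {N : nat} (w : seqN N) : seqN N := fun n => w n.+1.
Definition shiftn {N : nat} (k : nat) (w : seqN N) : seqN N := iter k shift w.

Definition lex_lt {N : nat} (w w' : seqN N) : Prop :=
  exists n : nat, (forall k, k < n -> w k = w' k) /\ (w n < w' n)%N.

Definition defines {N L : nat} (w : seqN N) (pi : 'S_L) : Prop :=
  forall (i j : 'I_L), j = i.+1 :> nat ->
    lex_lt (shiftn (pi i) w) (shiftn (pi j) w).

Definition forbidden (N L : nat) (pi : 'S_L) : Prop :=
  ~ exists w : seqN N, defines w pi.

(* Main.v *)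
Require Import Defs.
From mathcomp Require Import all_boot all_order all_fingroup.
From mathcomp Require Import zify.
Set Implicit Arguments. Unset Strict Implicit. Unset Printing Implicit Defensive.

Lemma shiftnE N k (w : seqN N) n : shiftn k w n = w (n + k).
Proof.
elim: k w n => [|k IH] w n; first by rewrite addn0.
by rewrite /shiftn iterSr -/(shiftn k (shift w)) IH /shift addnS.
Qed.

Definition ff (t k : nat) := if k <= t then k else k.-1.
Definition rk (L' : nat) (pi : 'S_L'.+1) (n : nat) : nat :=
  val ((pi^-1)%g (inord n : 'I_L'.+1)).
Definition WW (L' : nat) (pi : 'S_L'.+1) (t c n : nat) :=
  if n < L'.+1 then ff t (rk pi n) else c.
Definition mkw (N' L' : nat) (pi : 'S_L'.+1) (t c : nat) : seqN N'.+1 :=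
  fun n => inord (WW pi t c n).

Lemma rk_pi L' (pi : 'S_L'.+1) (i : 'I_L'.+1) : rk pi (pi i) = i.
Proof. by rewrite /rk inord_val permK. Qed.

Lemma rk_lt L' (pi : 'S_L'.+1) n : rk pi n < L'.+1.
Proof. exact: ltn_ord. Qed.

Lemma rk_inj L' (pi : 'S_L'.+1) n m : n < L'.+1 -> m < L'.+1 ->
  rk pi n = rk pi m -> n = m.
Proof.
move=> hn hm /val_inj /perm_inj h.
have := congr1 (@nat_of_ord _) h; by rewrite !inordK.
Qed.

Lemma pos_of_rk L' (pi : 'S_L'.+1) (i : 'I_L'.+1) n : n < L'.+1 ->
  rk pi n = i -> pi i = n :> nat.
Proof.
move=> hn h; apply: (@rk_inj L' pi) => //; by rewrite ?rk_pi.
Qed.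

Lemma first_nz (x : nat -> nat) n : x n != 0 ->
  exists n', (forall k, k < n' -> x k = 0) /\ x n' != 0.
Proof.
move=> hn.
have ex : exists n, x n != 0 by exists n.
case: (ex_minnP ex) => n' hn' hmin.
exists n'; split => // k hk; apply/eqP; apply: contraTT hk => hk'.
by rewrite -leqNgt; apply: hmin.
Qed.

Lemma lexW N' L' (pi : 'S_L'.+1) t c :
  (forall n, WW pi t c n <= N') -> forall a b n,
  (forall k, k < n -> WW pi t c (k + a) = WW pi t c (k + b)) ->
  WW pi t c (n + a) < WW pi t c (n + b) ->
  lex_lt (shiftn a (mkw N' pi t c)) (shiftn b (mkw N' pi t c)).
Proof.
move=> hb a b n heq hlt; exists n; split.
  move=> k hk; rewrite !shiftnE; apply: val_inj => /=.
  by rewrite /mkw !inordK ?ltnS ?hb // heq.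
by rewrite !shiftnE /mkw !inordK ?ltnS ?hb.
Qed.

Lemma lex1 N' L' (pi : 'S_L'.+1) t c :
  (forall n, WW pi t c n <= N') -> forall a b,
  WW pi t c a = WW pi t c b ->
  WW pi t c a.+1 < WW pi t c b.+1 ->
  lex_lt (shiftn a (mkw N' pi t c)) (shiftn b (mkw N' pi t c)).
Proof.
move=> hb a b h0 h1; apply: (lexW hb (n := 1)) => //.
by case.
Qed.

Lemma gen N' L' t c (pi : 'S_L'.+1) :
  (forall n, WW pi t c n <= N') ->
  (forall i j : 'I_L'.+1, j = i.+1 :> nat -> i = t :> nat ->
     lex_lt (shiftn (pi i) (mkw N' pi t c)) (shiftn (pi j) (mkw N' pi t c))) ->
  defines (mkw N' pi t c) pi.
Proof.
move=> hb ht i j hij.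
have [it|nit] := eqVneq (i : nat) t; first exact: ht.
apply: (lexW hb (n := 0)) => //.
rewrite !add0n /WW !ltn_ord !rk_pi /ff hij.
move/eqP: nit => nit.
case: (leqP i t) => h1; case: (leqP i.+1 t) => h2; lia.
Qed.

Lemma WW_tail L' (pi : 'S_L'.+1) t c n : L'.+1 <= n -> WW pi t c n = c.
Proof. by move=> h; rewrite /WW ltnNge h. Qed.

Lemma WW_in L' (pi : 'S_L'.+1) t c n : n < L'.+1 -> WW pi t c n = ff t (rk pi n).
Proof. by move=> h; rewrite /WW h. Qed.

Lemma bound N' L' (pi : 'S_L'.+1) t c : L' <= N'.+1 -> t < L' \/ L' <= N' -> c <= N' ->
  forall n, WW pi t c n <= N'.
Proof.
move=> h1 h2 h3 n; rewrite /WW; case: ifP => // _.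
have := rk_lt pi n; rewrite /ff; case: ifP; lia.
Qed.

Theorem proposition3 (N : nat) (HN : (2 <= N)%N) (L : nat) (HL : (L <= N.+1)%N)
  (pi : 'S_L) : exists w : seqN N, defines w pi.
Proof.
case: N HN HL => [//|N'] HN HL.
case: L HL pi => [|L'] HL pi.
  by exists (fun _ => ord0); case.
have [small|big] := leqP L' N'.
  exists (mkw N' pi L'.+1 0); apply: gen; first by apply: bound => //; lia.
  by move=> i j _ hi; have := ltn_ord i; lia.
have EL : L' = N'.+1 by lia.
set m := rk pi L'.
have hm : m < L'.+1 by apply: rk_lt.
have rL : forall i : 'I_L'.+1, i = m :> nat -> pi i = L' :> nat.
  by move=> i hi; apply: pos_of_rk => //; rewrite hi.
have rkne : forall (i : 'I_L'.+1) n, n < L'.+1 -> rk pi n != i -> pi i != n :> nat.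
  by move=> i n hn; apply: contra => /eqP <-; rewrite rk_pi.
have rkI : forall n p, n < L'.+1 -> p < L'.+1 -> rk pi n = rk pi p -> n = p.
  by move=> n p; apply: rk_inj.
have posn : forall i : 'I_L'.+1, pi i < L'.+1 by move=> i; apply: ltn_ord.
have [ma|nma] := boolP ((0 < m) && (m < L')).
  case/andP: ma => m0 m1.
  have hb : forall n, WW pi m 0 n <= N' by apply: bound; lia.
  exists (mkw N' pi m 0); apply: gen => // i j hij hi.
  rewrite (rL i hi).
  have hbj : rk pi (pi j) = j by rewrite rk_pi.
  have hbL : pi j < L'.
    have := posn j; rewrite ltnS leq_eqVlt => /orP [/eqP e|//].
    by move: hbj; rewrite e -/m; lia.
  have Wb : WW pi m 0 (pi j) = m by rewrite WW_in ?hbj /ff; [case: ifP; lia|].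
  have WL : WW pi m 0 L' = m by rewrite WW_in // /ff -/m leqnn.
  have : (fun k => WW pi m 0 (k + (pi j).+1)) (L' - (pi j).+1) != 0.
    by rewrite /= subnK // WL; lia.
  move/(@first_nz (fun k => WW pi m 0 (k + (pi j).+1))) => [n' [hz hnz]].
  apply: (lexW hb (n := n'.+1)).
    case => [_|k hk]; first by rewrite !add0n WL Wb.
    rewrite WW_tail; last lia.
    by rewrite addSnnS (hz k).
  by rewrite WW_tail ?addSnnS; lia.
have hp : L'.-1 < L'.+1 by lia.
have m0L : (m == 0) || (m == L') by lia.
case/orP: m0L => /eqP m0.
  case: (eqVneq (rk pi L'.-1) 1) => r1.
    have hb : forall n, WW pi 1 0 n <= N' by apply: bound; lia.
    exists (mkw N' pi 1 0); apply: gen => // i j hij hi.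
    have -> : pi i = L'.-1 :> nat by apply: pos_of_rk => //; rewrite r1 hi.
    have hbj : rk pi (pi j) = j by rewrite rk_pi.
    have hne1 : pi j != L'.-1 :> nat by apply: rkne => //; rewrite r1 hij hi.
    have hne2 : pi j != L' :> nat by apply: rkne => //; rewrite -/m m0 hij hi.
    have hjl := posn j.
    apply: (lex1 hb).
      by rewrite !WW_in // r1 hbj /ff hij hi.
    rewrite prednK; last lia.
    rewrite WW_in // -/m m0 WW_in; last lia.
    have : rk pi (pi j).+1 != 0.
      apply/eqP => h.
      have : (pi j).+1 = L' by apply: rkI => //; [lia| rewrite h -/m m0].
      lia.
    rewrite /ff /=; case: ifP; lia.
  have hb : forall n, WW pi 0 0 n <= N' by apply: bound; lia.
  exists (mkw N' pi 0 0); apply: gen => // i j hij hi.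
  rewrite (rL i); last by rewrite hi m0.
  have hbj : rk pi (pi j) = j by rewrite rk_pi.
  have hne1 : pi j != L'.-1 :> nat by apply: rkne => //; rewrite hij hi.
  have hne2 : pi j != L' :> nat by apply: rkne => //; rewrite -/m m0 hij hi.
  have hjl := posn j.
  apply: (lex1 hb).
    by rewrite !WW_in // -/m m0 hbj /ff hij hi.
  rewrite WW_tail // WW_in; last lia.
  have h0 : rk pi (pi j).+1 != 0.
    apply/eqP => h.
    have : (pi j).+1 = L' by apply: rkI => //; [lia| rewrite h -/m m0].
    lia.
  have h1 : rk pi (pi j).+1 != 1.
    apply/eqP => h.
    have : (pi j).+1 = pi j by apply: rkI => //; [lia| rewrite h hbj hij hi].
    lia.
  rewrite /ff; case: ifP; lia.
case: (eqVneq (rk pi L'.-1) L'.-1) => r1.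
  have hb : forall n, WW pi L'.-2 0 n <= N' by apply: bound; lia.
  exists (mkw N' pi L'.-2 0); apply: gen => // i j hij hi.
  have -> : pi j = L'.-1 :> nat by apply: pos_of_rk => //; rewrite r1 hij hi; lia.
  have hbj : rk pi (pi i) = i by rewrite rk_pi.
  have hne1 : pi i != L'.-1 :> nat by apply: rkne => //; rewrite r1 hi; lia.
  have hne2 : pi i != L' :> nat by apply: rkne => //; rewrite -/m m0 hi; lia.
  have hjl := posn i.
  apply: (lex1 hb).
    rewrite !WW_in // r1 hbj /ff hi.
    case: ifP; case: ifP; lia.
  rewrite prednK; last lia.
  rewrite (WW_in _ _ _ (n := L')) // -/m m0 WW_in; last lia.
  have : rk pi (pi i).+1 != L'.
    apply/eqP => h.
    have : (pi i).+1 = L' by apply: rkI => //; [lia| rewrite h -/m m0].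
    lia.
  have := rk_lt pi (pi i).+1.
  rewrite /ff; case: ifP; case: ifP; lia.
have hb : forall n, WW pi L'.-1 N' n <= N' by apply: bound; lia.
exists (mkw N' pi L'.-1 N'); apply: gen => // i j hij hi.
rewrite (rL j); last by rewrite hij hi m0; lia.
have hbj : rk pi (pi i) = i by rewrite rk_pi.
have hne1 : pi i != L'.-1 :> nat by apply: rkne => //; rewrite hi.
have hne2 : pi i != L' :> nat by apply: rkne => //; rewrite -/m m0 hi; lia.
have hjl := posn i.
apply: (lex1 hb).
  rewrite !WW_in // -/m m0 hbj /ff hi.
  case: ifP; case: ifP; lia.
rewrite (WW_tail _ _ _ (n := L'.+1)) // WW_in; last lia.
have h0 : rk pi (pi i).+1 != L'.
  apply/eqP => h.
  have : (pi i).+1 = L' by apply: rkI => //; [lia| rewrite h -/m m0].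
  lia.
have h1 : rk pi (pi i).+1 != L'.-1.
  apply/eqP => h.
  have : (pi i).+1 = pi i by apply: rkI => //; [lia| rewrite h hbj hi].
  lia.
have := rk_lt pi (pi i).+1.
rewrite /ff; case: ifP; lia.
Qed.
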